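(* The full subcategory $\mathsf{PreComp}\subseteq\mathsf{sSet}^+$ of pre-complicial sets is closed under the Gray tensor product: if $X$ and $Y$ are pre-complicial, then so is $X\otimes Y$.
   Context: A marked simplicial set is a simplicial set $X$ with a set of marked simplices of positive dimension containing all degenerate simplices; maps preserve marked simplices; category $\mathsf{sSet}^+$. Simplicial operators act on the right; $\delta_k$ denotes the $k$-th face operator. For $n\ge1$ and $0\le k\le n$, $\Delta^n_k$ is $\Delta^n$ in which a non-degenerate simplex is marked iff it contains all vertices in $\{k-1,k,k+1\}\cap[n]$. For $n\ge2$, $(\Delta^n_k)''$ is $\Delta^n_k$ with additionally all $(n-1)$-simplices marked, and $(\Delta^n_k)'$ is $\Delta^n_k$ with additionally all $(n-1)$-faces other than $\delta_k$ marked. A pre-complicial set is a marked simplicial set with the right lifting property with respect to all inclusions $(\Delta^n_k)'\to(\Delta^n_k)''$; $\mathsf{PreComp}$ is the full subcategory of these. For $0\le p\le n$ with $p+q=n$, let $\lfloor p\rfloor\colon[p]\to[n]$ be $i\mapsto i$ and $\lceil q\rceil\colon[q]\to[n]$ be $i\mapsto p+i$. For $X,Y\in\mathsf{sSet}^+$ and $(x,y)\in X_n\times Y_n$, $(x,y)$ is $i$-cloven ($0\le i\le n$) if $x\lfloor i\rfloor$ is marked in $X$ or $y\lceil n-i\rceil$ is marked in $Y$ (note $0$-simplices are never marked). The Gray tensor product $X\otimes Y$ has underlying simplicial set $X\times Y$, with $(x,y)$ marked iff it is $i$-cloven for every $0\le i\le n$. *)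

(* Defs.v *)
From mathcomp Require Import all_boot.
Set Implicit Arguments. Unset Strict Implicit. Unset Printing Implicit Defensive.

Definition mono m n (f : {ffun 'I_m.+1 -> 'I_n.+1}) : bool :=
  [forall i : 'I_m.+1, forall j : 'I_m.+1, (i <= j) ==> (f i <= f j)].

Definition op m n := {f : {ffun 'I_m.+1 -> 'I_n.+1} | mono f}.

Definition opf m n (f : op m n) : 'I_m.+1 -> 'I_n.+1 := fun i => val f i.

Lemma mono_id n : mono [ffun i : 'I_n.+1 => i].
Proof. by apply/forallP=> i; apply/forallP=> j; rewrite !ffunE; apply/implyP. Qed.

Definition idop n : op n n := exist (fun f => mono f) _ (mono_id n).

Lemma mono_comp l m n (g : op m n) (f : op l m) :
  mono [ffun i : 'I_l.+1 => val g (val f i)].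
Proof.
apply/forallP=> i; apply/forallP=> j; rewrite !ffunE; apply/implyP=> hij.
have hf := (implyP (forallP (forallP (svalP f) i) j) hij).
exact: (implyP (forallP (forallP (svalP g) _) _) hf).
Qed.

(* comp g f = g o f  (first f : [l] -> [m], then g : [m] -> [n]) *)
Definition comp l m n (g : op m n) (f : op l m) : op l n :=
  exist (fun h => mono h) _ (mono_comp g f).

Record sSet := SSet {
  sob :> nat -> Type;
  sact : forall m n, op m n -> sob n -> sob m;
  sact_id : forall n (x : sob n), sact (idop n) x = x;
  sact_comp : forall l m n (f : op l m) (g : op m n) (x : sob n),
      sact f (sact g x) = sact (comp g f) x
}.
Arguments sact {s m n}.

Definition degenerate (X : sSet) n (x : X n) : Prop :=
  exists m (s : op n m), m < n /\
    (forall j : 'I_m.+1, exists i : 'I_n.+1, val s i = j) /\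
    exists y : X m, x = sact s y.

Record msSet := MSSet { msU :> sSet; marked : forall n, msU n -> Prop }.
Arguments marked {m n}.

Definition is_msSet (X : msSet) : Prop :=
  (forall x : X 0, ~ marked x) /\
  (forall n (x : X n), degenerate x -> marked x).

Record msMap (X Y : msSet) := MSMap {
  mfun :> forall n, X n -> Y n;
  mfun_nat : forall m n (f : op m n) (x : X n), mfun (sact f x) = sact f (mfun x);
  mfun_mark : forall n (x : X n), marked x -> marked (mfun x)
}.

Lemma comp_id_r m n (x : op m n) : comp x (idop m) = x.
Proof. by apply: val_inj; apply/ffunP=> i; rewrite /= !ffunE. Qed.

Lemma comp_assoc l m p n (x : op p n) (g : op m p) (f : op l m) :
  comp (comp x g) f = comp x (comp g f).
Proof. by apply: val_inj; apply/ffunP=> i; rewrite /= !ffunE. Qed.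

Definition Delta (n : nat) : sSet :=
  @SSet (fun m => op m n) (fun l m f x => comp x f)
        (fun m x => comp_id_r x)
        (fun l m p f g x => comp_assoc x g f).

Definition contains_S (n k m : nat) (x : op m n) : bool :=
  [forall v : 'I_n.+1, ((k <= v.+1) && (v <= k.+1)) ==>
                       [exists i : 'I_m.+1, val x i == v]].

Definition Dk_mark (n k m : nat) (x : Delta n m) : Prop :=
  degenerate x \/ (~ degenerate x /\ contains_S k x).

Definition is_face_k (n k m : nat) (x : op m n) : bool :=
  (m.+1 == n) && [forall i : 'I_m.+1, val (val x i) == bump k i].

Definition Delta_k (n k : nat) : msSet :=
  @MSSet (Delta n) (fun m x => Dk_mark k x).

Definition Delta_k'' (n k : nat) : msSet :=
  @MSSet (Delta n) (fun m x => Dk_mark k x \/ m.+1 = n).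

Definition Delta_k' (n k : nat) : msSet :=
  @MSSet (Delta n) (fun m x => Dk_mark k x \/ (m.+1 = n /\ ~~ is_face_k k x)).

(* RLP w.r.t. the inclusions (Delta^n_k)' -> (Delta^n_k)'' (identity on
   underlying simplicial sets), for n >= 2 and 0 <= k <= n. *)
Definition pre_complicial (X : msSet) : Prop :=
  forall n k : nat, 2 <= n -> k <= n ->
  forall f : msMap (Delta_k' n k) X,
  exists g : msMap (Delta_k'' n k) X,
    forall m (x : Delta n m), g m x = f m x.

Definition prod_sSet (X Y : sSet) : sSet.
Proof.
refine (@SSet (fun n => (X n * Y n)%type)
              (fun m n f p => (sact f p.1, sact f p.2)) _ _).
- by move=> n [x y] /=; rewrite !sact_id.
- by move=> l m n f g [x y] /=; rewrite !sact_comp.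
Defined.

Lemma mono_floor n (i : 'I_n.+1) :
  mono [ffun j : 'I_i.+1 => widen_ord (ltn_ord i) j].
Proof. by apply/forallP=> a; apply/forallP=> b; rewrite !ffunE; apply/implyP. Qed.

Definition floor_op n (i : 'I_n.+1) : op i n := exist (fun h => mono h) _ (mono_floor i).

Lemma mono_ceil n (i : 'I_n.+1) :
  mono [ffun j : 'I_(n - i).+1 => (inord (i + j) : 'I_n.+1)].
Proof.
have bd (j : 'I_(n - i).+1) : i + j <= n.
  have hj := ltn_ord j; have hi := ltn_ord i; rewrite ltnS in hi; rewrite ltnS in hj.
  by rewrite -(leq_add2l i) (subnKC hi) in hj.
apply/forallP=> a; apply/forallP=> b; rewrite !ffunE; apply/implyP=> hab.
by rewrite !inordK ?ltnS ?bd // leq_add2l.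
Qed.

Definition ceil_op n (i : 'I_n.+1) : op (n - i) n := exist (fun h => mono h) _ (mono_ceil i).

Definition cloven (X Y : msSet) n (x : X n) (y : Y n) (i : 'I_n.+1) : Prop :=
  marked (sact (floor_op i) x) \/ marked (sact (ceil_op i) y).

Definition gray (X Y : msSet) : msSet :=
  @MSSet (prod_sSet X Y)
         (fun n p => forall i : 'I_n.+1, cloven p.1 p.2 i).

(* Main.v *)
From Pilot Require Import Defs.
From mathcomp Require Import all_boot.
From mathcomp Require Import zify.
From Stdlib Require Import Classical.
Import Pilot.Defs.
Set Implicit Arguments. Unset Strict Implicit. Unset Printing Implicit Defensive.

Definition oprep m n (x : op m n) (g : nat -> nat) :=
  forall i : 'I_m.+1, nat_of_ord (val x i) = g i.

Lemma op_ext m n (x y : op m n) :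
  (forall i : 'I_m.+1, nat_of_ord (val x i) = nat_of_ord (val y i)) -> x = y.
Proof. move=> H; apply: val_inj; apply/ffunP=> i; apply: val_inj; exact: H. Qed.

Definition opfun m n (x : op m n) : nat -> nat := fun i => nat_of_ord (val x (inord i)).
Lemma repr_opfun m n (x : op m n) : oprep x (opfun x).
Proof. by move=> i; rewrite /opfun inord_val. Qed.

Lemma repr_mono m n (x : op m n) g : oprep x g -> forall i j, i <= j <= m -> g i <= g j.
Proof.
move=> Hx i j /andP[hij hjm].
have him : i < m.+1 by lia.
have hjm' : j < m.+1 by lia.
rewrite -(Hx (Ordinal him)) -(Hx (Ordinal hjm')).
exact: (implyP (forallP (forallP (svalP x) (Ordinal him)) (Ordinal hjm')) hij).
Qed.

Lemma repr_bound m n (x : op m n) g : oprep x g -> forall i, i <= m -> g i <= n.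
Proof.
move=> Hx i him; have h : i < m.+1 by lia.
rewrite -(Hx (Ordinal h)). by rewrite -ltnS ltn_ord.
Qed.

Lemma ex_op m n (g : nat -> nat) :
  (forall i j, i <= j <= m -> g i <= g j) -> (forall i, i <= m -> g i <= n) ->
  exists x : op m n, oprep x g.
Proof.
move=> Hm Hb.
have hb (i : 'I_m.+1) : g i < n.+1 by rewrite ltnS; apply: Hb; rewrite -ltnS.
pose F := [ffun i : 'I_m.+1 => (Ordinal (hb i) : 'I_n.+1)].
have mF : mono F.
  apply/forallP=> i; apply/forallP=> j; apply/implyP=> hij; rewrite !ffunE /=.
  apply: Hm; rewrite hij /= -ltnS; exact: ltn_ord.
exists (exist (fun f => mono f) F mF) => i /=; by rewrite ffunE.
Qed.

Lemma repr_comp l m n (x : op m n) (y : op l m) g h :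
  oprep x g -> oprep y h -> oprep (comp x y) (g \o h).
Proof. move=> Hx Hy i; rewrite /comp /= ffunE Hx /= Hy. done. Qed.

Lemma repr_floor n (i : 'I_n.+1) : oprep (floor_op i) id.
Proof. by move=> j; rewrite /floor_op /= ffunE. Qed.

Lemma repr_ceil n (i : 'I_n.+1) : oprep (ceil_op i) (fun j => i + j).
Proof.
move=> j; rewrite /ceil_op /= ffunE inordK //.
have := ltn_ord j; have := ltn_ord i; lia.
Qed.

Definition Mk (Z : msSet) n (c : Z n) m (g : nat -> nat) : Prop :=
  exists x : op m n, oprep x g /\ marked (sact x c).

Lemma Mk_ext (Z : msSet) n (c : Z n) m g h : Mk c m g -> (forall i, i <= m -> g i = h i) -> Mk c m h.
Proof.
case=> x [Hx Hm] E; exists x; split=> // i; rewrite Hx E //; rewrite -ltnS; exact: ltn_ord.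
Qed.

Lemma Mk_op (Z : msSet) n (c : Z n) m g (x : op m n) : Mk c m g -> oprep x g -> marked (sact x c).
Proof. case=> y [Hy Hm] Hx; have -> : x = y by apply: op_ext=> i; rewrite Hx Hy. done. Qed.

Lemma Mk0 (Z : msSet) n (c : Z n) g : is_msSet Z -> ~ Mk c 0 g.
Proof. by move=> [H0 _] [x [_ Hm]]; apply: (H0 _ Hm). Qed.

Lemma comp_id_l m n (x : op m n) : comp (idop n) x = x.
Proof. by apply: op_ext=> i; rewrite /= !ffunE. Qed.

Lemma bumpE j i : bump j i = if j <= i then i.+1 else i.
Proof. by rewrite /bump; case: leqP. Qed.

Lemma deg_repeat (Z : sSet) m n (x : op m n) g (c : Z n) :
  oprep x g -> (exists2 i, i < m & g i = g i.+1) -> degenerate (sact x c).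
Proof.
move=> Hx [i hi E]; destruct m as [|m]; first by [].
have Hm := repr_mono Hx; have Hb := repr_bound Hx.
have [s Hs] : exists s : op m.+1 m, oprep s (fun j => if j <= i then j else j.-1).
  apply: ex_op.
- move=> p q /andP[hpq hq]; case: (leqP p i); case: (leqP q i); lia.
- move=> p hp; case: (leqP p i); lia.
have [y Hy] : exists y : op m n, oprep y (fun l => if l <= i then g l else g l.+1).
  apply: ex_op.
- move=> p q /andP[hpq hq]; case: (leqP p i); case: (leqP q i) => h1 h2;
    apply: Hm; lia.
- move=> p hp; case: (leqP p i) => _; apply: Hb; lia.
exists m, s; split; first by [].
split.
  move=> j; have hj : (if j <= i then nat_of_ord j else j.+1) < m.+2.
    have := ltn_ord j; case: (leqP j i); lia.
  exists (Ordinal hj); apply: val_inj; rewrite /= Hs /=.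
  case: (leqP j i) => hji; first by rewrite hji.
  by rewrite leqNgt ltnS (ltnW hji).
exists (sact y c); rewrite sact_comp; f_equal; apply: op_ext => j.
rewrite (repr_comp Hy Hs j) Hx /=.
have := ltn_ord j; case: (leqP j i) => h1 h2; first by rewrite h1.
case: (leqP j.-1 i) => h3.
  have -> : nat_of_ord j = i.+1 by lia. by rewrite -E.
by rewrite prednK //; lia.
Qed.

Lemma mono_or_rep m (g : nat -> nat) : (forall i j, i <= j <= m -> g i <= g j) ->
  (forall i, i < m -> g i < g i.+1) \/ (exists2 i, i < m & g i = g i.+1).
Proof.
move=> Hm; case: (classic (exists2 i, i < m & g i = g i.+1)) => [h|h]; [by right|left].
move=> i him; have h1 : g i <= g i.+1 by apply: Hm; lia.
have h2 : g i <> g i.+1 by move=> E; apply: h; exists i.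
lia.
Qed.

Lemma deg_delta m n (x : op m n) g : oprep x g -> (exists2 i, i < m & g i = g i.+1) ->
  @degenerate (Delta n) m x.
Proof.
move=> Hx Hr. have := @deg_repeat (Delta n) m n x g (idop n) Hx Hr.
by rewrite /= comp_id_l.
Qed.

Lemma deg_transfer (Z : sSet) N (c : Z N) m (x : op m N) :
  @degenerate (Delta N) m x -> degenerate (sact x c).
Proof.
case=> m0 [s [hm [hs [y E]]]]. exists m0, s; split=> //; split=> //.
exists (sact y c). rewrite sact_comp. by rewrite E.
Qed.

Lemma face_char M (g : nat -> nat) : (forall i, i < M -> g i < g i.+1) -> g M <= M.+1 ->
  exists2 j, j <= M.+1 & forall i, i <= M -> g i = bump j i.
Proof.
move=> Hs HM.
have lo : forall i, i <= M -> i <= g i.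
  elim=> [|i IH] hi; first by [].
  have := Hs i hi. have := IH (ltnW hi). lia.
have hi : forall d, d <= M -> g (M - d) + d <= M.+1.
  elim=> [|d IH] hd; first by rewrite subn0 addn0.
  have h1 := IH (ltnW hd). have h2 := Hs (M - d.+1) ltac:(lia).
  have e : (M - d.+1).+1 = M - d by lia.
  rewrite e in h2. lia.
have up : forall i, i <= M -> g i <= i.+1.
  move=> i him; have := hi (M - i) (leq_subr _ _). rewrite subKn //. lia.
case: (classic (exists i, (i <= M) && (g i == i.+1))) => [ex|nex].
- case: (ex_minnP ex) => j /andP[hjM /eqP hj] hmin.
  exists j; first lia.
  have aft : forall d, j + d <= M -> g (j + d) = (j + d).+1.
    elim=> [|d IH] hd; first by rewrite addn0.
    have h1 := IH ltac:(lia).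
    have h2 := Hs (j + d) ltac:(lia). have h3 := up (j + d).+1 ltac:(lia).
    rewrite addnS; lia.
  move=> i him; rewrite bumpE; case: (leqP j i) => hji.
  + have := aft (i - j) ltac:(lia). by rewrite subnKC.
  + have h1 := lo i him; have h2 := up i him.
    case: (eqVneq (g i) i.+1) => [E|E]; last lia.
    have := hmin i; rewrite him E eqxx /= => /(_ isT); lia.
- exists M.+1 => // i him; rewrite bumpE ltnNge him /=.
  have h1 := lo i him; have h2 := up i him.
  case: (eqVneq (g i) i.+1) => [E|E]; last lia.
  exfalso; apply: nex; exists i; by rewrite him E eqxx.
Qed.

Lemma PCf (X : msSet) (HX : is_msSet X) (PX : pre_complicial X) n (a : X n) M
  (h : nat -> nat) K :
  1 <= M -> K <= M.+1 ->
  (forall i j, i <= j <= M.+1 -> h i <= h j) -> (forall i, i <= M.+1 -> h i <= n) ->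
  (forall m g, (forall i j, i <= j <= m -> g i <= g j) -> (forall i, i <= m -> g i <= M.+1) ->
     (forall v, v <= M.+1 -> K <= v.+1 -> v <= K.+1 -> exists2 i, i <= m & g i = v) ->
     Mk a m (h \o g)) ->
  (forall j, j <= M.+1 -> j != K -> Mk a M (h \o bump j)) ->
  Mk a M (h \o bump K).
Proof.
move=> hM hK hm hb H1 H2.
have [y Hy] := ex_op hm hb.
pose c := sact y a.
have key : forall m (x : op m M.+1) g, oprep x g -> Mk a m (h \o g) -> marked (sact x c).
  move=> m x g Hx Hk; rewrite /c sact_comp; apply: (Mk_op Hk); exact: repr_comp.
have degm : forall m (x : op m M.+1), @degenerate (Delta M.+1) m x -> marked (sact x c).
  move=> m x Hd; apply: HX.2; exact: deg_transfer.
have fmark : forall m (x : Delta_k' M.+1 K m), marked x -> marked (sact x c).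
  move=> m x [[Hd|[Hnd Hc]]|[Hm Hf]].
  - exact: degm.
  - have Hx := repr_opfun (x : op m M.+1).
    case: (mono_or_rep (repr_mono Hx)) => [Hst|Hr]; last by apply: degm; exact: deg_delta Hx Hr.
    apply: (key _ _ _ Hx); apply: H1.
    + exact: repr_mono Hx.
    + exact: repr_bound Hx.
    + move=> v hv h1 h2.
      have hv' : v < M.+2 by lia.
      have /implyP := forallP Hc (Ordinal hv').
      rewrite /= h1 h2 => /(_ isT)/existsP[i /eqP Ei].
      exists (nat_of_ord i); first by rewrite -ltnS ltn_ord.
      by rewrite -(Hx i) Ei.
  - case: Hm => Hm; subst m.
    have Hx := repr_opfun (x : op M M.+1).
    case: (mono_or_rep (repr_mono Hx)) => [Hst|Hr]; last by apply: degm; exact: deg_delta Hx Hr.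
    have [j hj Ej] := face_char Hst (repr_bound Hx (leqnn M)).
    have Hxj : oprep (x : op M M.+1) (bump j).
      move=> i; rewrite Hx Ej // -ltnS; exact: ltn_ord.
    apply: (key _ _ _ Hxj); apply: H2 => //.
    apply/eqP=> EjK; subst j; move: Hf; rewrite /is_face_k eqxx /=.
    move/negP; apply; apply/forallP=> i; apply/eqP; exact: Hxj.
have fnat : forall m p (f' : op m p) (x : Delta_k' M.+1 K p),
    sact (sact f' x) c = sact f' (sact x c).
  move=> m p f' x; by rewrite sact_comp.
pose f : msMap (Delta_k' M.+1 K) X := @MSMap _ _ (fun m (x : Delta_k' M.+1 K m) => sact (x : op m M.+1) c) fnat fmark.
have [g Hg] := PX M.+1 K ltac:(lia) hK f.
have [d Hd] : exists d : op M M.+1, oprep d (bump K).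
  apply: ex_op.
  - move=> i j /andP[hij _]; by rewrite leq_bump2.
  - move=> i hi; rewrite bumpE; case: (leqP K i); lia.
have := @mfun_mark _ _ g M d (or_intror erefl).
rewrite Hg /= /c sact_comp => Hmk.
exists (Defs.comp y d); split=> //; exact: repr_comp.
Qed.

Ltac splitifs := repeat match goal with |- context [if ?b then _ else _] =>
  lazymatch b with context [if _ then _ else _] => fail | _ => case: (boolP b) => ? /= end end.

Definition join l (w V : nat -> nat) j := if j <= l then w j else V (j - l).

Section Gray.
Variables (X Y : msSet) (HX : is_msSet X) (HY : is_msSet Y)
  (PX : pre_complicial X) (PY : pre_complicial Y) (n : nat) (a : X n) (b : Y n).

Definition GMg m g := forall i, i <= m -> Mk a i g \/ Mk b (m - i) (fun j => g (i + j)).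

Lemma GMg_ext m g h : GMg m g -> (forall i, i <= m -> g i = h i) -> GMg m h.
Proof.
move=> H E i hi; case: (H i hi) => Hm; [left|right]; apply: (Mk_ext Hm) => j hj; apply: E; lia.
Qed.

Lemma split_join l m w V : GMg (l + m) (join l w V) -> w l = V 0 -> Mk a l w \/ Mk b m V.
Proof.
move=> H E; case: (H l (leq_addr _ _)) => Hm; [left|right].
- apply: (Mk_ext Hm) => j hj; by rewrite /join hj.
- rewrite addKn in Hm; apply: (Mk_ext Hm) => j hj; rewrite /join.
  case: (boolP (l + j <= l)) => h1; last by rewrite addKn.
  have -> : j = 0 by lia. by rewrite addn0.
Qed.

Lemma keyA s m V : ~ Mk a s id -> s <= V 0 -> V 0 <= n ->
 (V 0 = s -> GMg (s + m) (join s id V)) ->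
 (s = 0 -> 0 < V 0 -> GMg m V) ->
 (0 < s -> s < V 0 -> forall l w, (forall i j, i <= j <= l -> w i <= w j) -> w l = V 0 ->
     (exists2 i, i <= l & w i = s) -> GMg (l + m) (join l w V)) ->
 (0 < s -> s < V 0 -> forall t, t <= s ->
     GMg (s + m) (join s ((fun j => if j <= s then j else V 0) \o bump t) V)) ->
 Mk b m V.
Proof.
move=> nA hs hV Q0 Qs0 Q1 Q2.
have [E|hlt] : V 0 = s \/ s < V 0 by lia.
  by case: (split_join (Q0 E) (esym E)).
have [s0|spos] : s = 0 \/ 0 < s by lia.
  case: (Qs0 s0 ltac:(lia) 0 (leq0n _)) => [/(Mk0 HX)//|Hm].
  rewrite subn0 in Hm; apply: (Mk_ext Hm) => j _; by rewrite add0n.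
apply: NNPP => nB; apply: nA.
set h := (fun j => if j <= s then j else V 0).
have hmono : forall i j, i <= j <= s.+1 -> h i <= h j.
  move=> i j /andP[hij _]; rewrite /h; splitifs; lia.
suff H : Mk a s (h \o bump s.+1).
  apply: (Mk_ext H) => i hi; rewrite /= bumpE /h.
  have -> : (s.+1 <= i) = false by apply/negbTE; lia.
  by rewrite hi.
apply: (@PCf X HX PX n a s h s.+1 spos (leqnn _) hmono).
- move=> i _; rewrite /h; splitifs; lia.
- move=> m' g gm gb gc.
  have [i1 hi1 E1] := gc s ltac:(lia) ltac:(lia) ltac:(lia).
  have [i2 hi2 E2] := gc s.+1 ltac:(lia) ltac:(lia) ltac:(lia).
  have gl : g m' = s.+1.
    have := gm i2 m' ltac:(lia); have := gb m' (leqnn _); lia.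
  have hw : forall i j, i <= j <= m' -> (h \o g) i <= (h \o g) j.
    move=> i j hij; apply: hmono; apply/andP; split; [exact: gm | apply: gb; lia].
  have := split_join (Q1 spos hlt m' (h \o g) hw _ _) _.
  case=> //.
  + by rewrite /= gl /h ltnn.
  + exists i1 => //; by rewrite /= E1 /h leqnn.
  + by rewrite /= gl /h ltnn.
- move=> j hj hjK.
  have := split_join (Q2 spos hlt j ltac:(lia)) _.
  case=> //. rewrite /= bumpE.
  have -> : (j <= s) = true by apply/idP; lia.
  by rewrite /h ltnn.
Qed.

Lemma keyB s m U : ~ Mk b (n - s) (fun j => s + j) -> s <= n -> U m <= s ->
 (U m = s -> GMg (m + (n - s)) (join m U (fun j => s + j))) ->
 (s = n -> U m < n -> GMg m U) ->
 (s < n -> U m < s -> forall l V, (forall i j, i <= j <= l -> V i <= V j) ->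
     (forall i, i <= l -> V i <= n) -> V 0 = U m ->
     (exists2 i, i <= l & V i = s) -> GMg (m + l) (join m U V)) ->
 (s < n -> U m < s -> forall t, 1 <= t -> t <= (n - s).+1 ->
     GMg (m + (n - s)) (join m U ((fun j => if j == 0 then U m else s + j.-1) \o bump t))) ->
 Mk a m U.
Proof.
move=> nB hs hU Q0 Qs Q1 Q2.
have [E|hlt] : U m = s \/ U m < s by lia.
  case: (split_join (Q0 E) _) => //; by rewrite addn0.
have [sn|slt] : s = n \/ s < n by lia.
  case: (Qs sn ltac:(lia) m (leqnn _)) => // Hm.
  rewrite subnn in Hm; by case: (Mk0 HY Hm).
apply: NNPP => nA; apply: nB.
set h := (fun j => if j == 0 then U m else s + j.-1).
have hmono : forall i j, i <= j <= (n - s).+1 -> h i <= h j.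
  move=> i j /andP[hij _]; rewrite /h; splitifs; lia.
suff H : Mk b (n - s) (h \o bump 0).
  apply: (Mk_ext H) => i hi; by rewrite /= /h bumpE leq0n.
apply: (@PCf Y HY PY n b (n - s) h 0 ltac:(lia) (leq0n _) hmono).
- move=> i hi; rewrite /h; splitifs; lia.
- move=> m' g gm gb gc.
  have [i0 hi0 E0] := gc 0 ltac:(lia) ltac:(lia) ltac:(lia).
  have [i1 hi1 E1] := gc 1 ltac:(lia) ltac:(lia) ltac:(lia).
  have g0 : g 0 = 0.
    have := gm 0 i0 ltac:(lia); lia.
  have hw : forall i j, i <= j <= m' -> (h \o g) i <= (h \o g) j.
    move=> i j hij; apply: hmono; apply/andP; split; [exact: gm | apply: gb; lia].
  have hb : forall i, i <= m' -> (h \o g) i <= n.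
    move=> i hi; have := gb i hi; rewrite /= /h; splitifs; lia.
  have := split_join (Q1 slt hlt m' (h \o g) hw hb _ _) _.
  case=> //.
  + by rewrite /= g0 /h.
  + exists i1 => //; by rewrite /= E1 /h /= addn0.
  + by rewrite /= g0 /h.
- move=> j hj hjK.
  have := split_join (Q2 slt hlt j ltac:(lia) hj) _.
  case=> //. rewrite /= bumpE.
  have -> : (j <= 0) = false by apply/negbTE; lia.
  by rewrite /h.
Qed.

Lemma HSJ k (HS : forall m g, (forall i j, i <= j <= m -> g i <= g j) ->
    (forall i, i <= m -> g i <= n) ->
    (forall v, v <= n -> k <= v.+1 -> v <= k.+1 -> exists2 i, i <= m & g i = v) -> GMg m g)
  l m w V :
 (forall i j, i <= j <= l -> w i <= w j) -> w l = V 0 ->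
 (forall i j, i <= j <= m -> V i <= V j) -> (forall i, i <= m -> V i <= n) ->
 (forall v, v <= n -> k <= v.+1 -> v <= k.+1 ->
    (exists2 i, i <= l & w i = v) \/ (exists2 i, i <= m & V i = v)) ->
 GMg (l + m) (join l w V).
Proof.
move=> wm wl Vm Vb Hc; apply: HS.
- move=> i j /andP[hij hj]; rewrite /join.
  case: (leqP j l) => hjl.
    have -> : (i <= l) = true by apply/idP; lia.
    apply: wm; lia.
  case: (leqP i l) => hil.
    apply: (leq_trans (wm i l ltac:(lia))); rewrite wl; apply: Vm; lia.
  apply: Vm; lia.
- move=> i hi; rewrite /join; case: (leqP i l) => hil.
    apply: (leq_trans (wm i l ltac:(lia))); rewrite wl; apply: Vb; lia.
  apply: Vb; lia.
- move=> v hv h1 h2; case: (Hc v hv h1 h2) => [[i hi E]|[i hi E]].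
    exists i; first lia. by rewrite /join hi.
  exists (l + i); first lia.
  rewrite /join; case: (leqP (l + i) l) => h.
    have e : i = 0 by lia. subst i. by rewrite addn0 wl.
  by rewrite addKn.
Qed.

Lemma gray_goal k (hn : 2 <= n) (hk : k <= n)
  (HS : forall m g, (forall i j, i <= j <= m -> g i <= g j) ->
    (forall i, i <= m -> g i <= n) ->
    (forall v, v <= n -> k <= v.+1 -> v <= k.+1 -> exists2 i, i <= m & g i = v) -> GMg m g)
  (HF : forall j, j <= n -> j != k -> GMg n.-1 (bump j)) :
  GMg n.-1 (bump k).
Proof.
move=> s hs.
case: (ltnP s k) => hsk.
- have [hs2|hs1] : s.+1 < n \/ s.+1 = n by lia.
  + case: (classic (Mk a s id)) => [HA|nA].
      left; apply: (Mk_ext HA) => i hi; rewrite bumpE.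
      by have -> : (k <= i) = false by apply/negbTE; lia.
    right.
    have -> : n.-1 - s = n - s.+1 by lia.
    suff H : Mk b (n - s.+1) ((fun j => s + j) \o bump (k - s)).
      apply: (Mk_ext H) => i hi; rewrite /= !bumpE.
      case: (leqP (k - s) i); case: (leqP k (s + i)); lia.
    apply: (@PCf Y HY PY n b (n - s.+1) (fun j => s + j) (k - s)).
    * lia.
    * lia.
    * move=> i j /andP[hij _]; lia.
    * move=> i hi; lia.
    * move=> m' g gm gb gc.
      set V := (fun j => s + j) \o g.
      have Vc : forall v, v <= n -> k <= v.+1 -> v <= k.+1 -> exists2 i, i <= m' & V i = v.
        move=> v hv h1 h2; have [i hi E] := gc (v - s) ltac:(lia) ltac:(lia) ltac:(lia).
        exists i => //; rewrite /V /= E; lia.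
      have Vm : forall i j, i <= j <= m' -> V i <= V j.
        move=> i j hij; rewrite /V /=; have := gm i j hij; lia.
      have Vb : forall i, i <= m' -> V i <= n.
        move=> i hi; rewrite /V /=; have := gb i hi; lia.
      have idm : forall l i j, i <= j <= l -> id i <= id j.
        by move=> l i j /andP[].
      apply: (keyA nA).
      -- rewrite /V /=; lia.
      -- exact: Vb 0 (leq0n _).
      -- move=> E; apply: (HSJ HS (idm s) (esym E) Vm Vb) => v hv h1 h2; right; exact: Vc.
      -- move=> _ _; exact: HS.
      -- move=> _ _ l w wm wl _; apply: (HSJ HS wm wl Vm Vb) => v hv h1 h2; right; exact: Vc.
      -- move=> _ hV0 t ht; apply: (HSJ HS _ _ Vm Vb).
         ++ move=> i j /andP[hij hj]; rewrite /= !bumpE.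
            case: (leqP t i); case: (leqP t j); splitifs; lia.
         ++ rewrite /= bumpE; have -> : (t <= s) = true by apply/idP; lia.
            by rewrite ltnn.
         ++ move=> v hv h1 h2; right; exact: Vc.
    * move=> j hj hjK.
      have [j0|jpos] : j = 0 \/ 0 < j by lia.
      -- subst j. set V := (fun j => s + j) \o bump 0.
         have Vj : forall i, V i = s + i.+1 by move=> i; rewrite /V /= bumpE leq0n.
         have Vm : forall i j, i <= j <= n - s.+1 -> V i <= V j.
           move=> i j hij; rewrite !Vj; lia.
         have Vb : forall i, i <= n - s.+1 -> V i <= n.
           move=> i hi; rewrite Vj; lia.
         apply: (keyA nA).
         ++ rewrite Vj; lia.
         ++ rewrite Vj; lia.
         ++ rewrite Vj; lia.
         ++ move=> s0 _; subst s.
            have -> : n - 1 = n.-1 by lia.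
            apply: (GMg_ext (HF 0 (leq0n _) ltac:(lia))) => i hi.
            by rewrite Vj bumpE leq0n.
         ++ move=> _ _ l w wm wl [i0 hi0 E0]; apply: (HSJ HS wm wl Vm Vb) => v hv h1 h2.
            have [vs|vs] : v = s \/ s < v by lia.
              left; exists i0 => //; by rewrite E0.
            right; exists (v - s.+1); first lia. rewrite Vj; lia.
         ++ move=> _ _ t ht.
            have -> : s + (n - s.+1) = n.-1 by lia.
            apply: (GMg_ext (HF t ltac:(lia) ltac:(lia))) => i hi.
            rewrite /join; case: (leqP i s) => his; rewrite /= ?Vj !bumpE; splitifs; lia.
      -- set V := (fun j' => s + j') \o bump j.
         have V0 : V 0 = s.
           rewrite /V /= bumpE. have -> : (j <= 0) = false by apply/negbTE; lia.
           by rewrite addn0.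
         apply: (keyA nA).
         ++ lia.
         ++ lia.
         ++ move=> _; have -> : s + (n - s.+1) = n.-1 by lia.
            apply: (GMg_ext (HF (s + j) ltac:(lia) ltac:(lia))) => i hi.
            rewrite /join /V; case: (leqP i s) => his; rewrite /= !bumpE; splitifs; lia.
         ++ lia.
         ++ lia.
         ++ lia.
  + left.
    have ekn : k = n by lia.
    suff H : Mk a s (id \o bump k) by apply: (Mk_ext H).
    apply: (@PCf X HX PX n a s id k).
    * lia.
    * lia.
    * by move=> i j /andP[].
    * move=> i hi; lia.
    * move=> m' g gm gb gc.
      have H0 : GMg m' g.
        apply: HS => //.
        - move=> i hi; have := gb i hi; lia.
        - move=> v hv h1 h2; apply: gc; lia.
      case: (H0 m' (leqnn _)) => [//|H].
      by rewrite subnn in H; case: (Mk0 HY H).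
    * move=> j hj hjK.
      case: (HF j ltac:(lia) hjK s ltac:(lia)) => // H.
      have e : n.-1 - s = 0 by lia. rewrite e in H; by case: (Mk0 HY H).
- have [s0|spos] : s = 0 \/ 0 < s by lia.
  + subst s. right. have k0 : k = 0 by lia. subst k.
    have e : n.-1 - 0 = n - 1 by lia. rewrite e.
    suff H : Mk b (n - 1) (id \o bump 0).
      apply: (Mk_ext H) => i hi; by rewrite add0n.
    apply: (@PCf Y HY PY n b (n - 1) id 0).
    * lia.
    * lia.
    * by move=> i j /andP[].
    * move=> i hi; lia.
    * move=> m' g gm gb gc.
      have [i0 hi0 E0] := gc 0 ltac:(lia) ltac:(lia) ltac:(lia).
      have H0 : GMg m' g.
        apply: HS => //.
        - move=> i hi; have := gb i hi; lia.
        - move=> v hv h1 h2; apply: gc; lia.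
      case: (H0 0 (leq0n _)) => [H|H]; first by case: (Mk0 HX H).
      rewrite subn0 in H; apply: (Mk_ext H) => i _; by rewrite add0n.
    * move=> j hj hjK.
      case: (HF j ltac:(lia) hjK 0 (leq0n _)) => H; first by case: (Mk0 HX H).
      rewrite e in H; apply: (Mk_ext H) => i _; by rewrite add0n.
  + case: (classic (Mk b (n - s.+1) (fun j => s.+1 + j))) => [HB|nB].
      right. have -> : n.-1 - s = n - s.+1 by lia.
      apply: (Mk_ext HB) => i hi; rewrite bumpE.
      have -> : (k <= s + i) = true by apply/idP; lia.
      lia.
    left. suff H : Mk a s (id \o bump k) by apply: (Mk_ext H).
    have idm : forall l i j, i <= j <= l -> id i <= id j by move=> l i j /andP[].
    have Sm : forall i j, i <= j <= n - s.+1 -> s.+1 + i <= s.+1 + j.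
      move=> i j hij; lia.
    have Sb : forall i, i <= n - s.+1 -> s.+1 + i <= n by move=> i hi; lia.
    apply: (@PCf X HX PX n a s id k spos).
    * lia.
    * by move=> i j /andP[].
    * move=> i hi; lia.
    * move=> m' g gm gb gc.
      have gc' : forall v, v <= n -> k <= v.+1 -> v <= k.+1 -> exists2 i, i <= m' & g i = v.
        move=> v hv h1 h2; apply: gc; lia.
      have gb' : forall i, i <= m' -> g i <= n by move=> i hi; have := gb i hi; lia.
      apply: (keyB nB); rewrite /=.
      -- lia.
      -- exact: gb.
      -- move=> E; apply: (HSJ HS gm _ Sm Sb); first by rewrite E addn0.
         move=> v hv h1 h2; left; exact: gc'.
      -- move=> _ _; exact: HS.
      -- move=> _ _ l V Vm Vb V0 _; apply: (HSJ HS gm (esym V0) Vm Vb).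
         move=> v hv h1 h2; left; exact: gc'.
      -- move=> _ hlt t t1 t2; apply: (HSJ HS gm).
         ++ rewrite /= bumpE; have -> : (t <= 0) = false by apply/negbTE; lia. by [].
         ++ move=> i j /andP[hij hj]; rewrite /= !bumpE.
            case: (leqP t i); case: (leqP t j); splitifs; lia.
         ++ move=> i hi; rewrite /= !bumpE; have := gb m' (leqnn _).
            case: (leqP t i); splitifs; lia.
         ++ move=> v hv h1 h2; left; exact: gc'.
    * move=> j hj hjK.
      have bm : forall l i i', i <= i' <= l -> bump j i <= bump j i'.
        move=> l i i' /andP[h _]; by rewrite leq_bump2.
      apply: (keyB nB); rewrite /=.
      -- lia.
      -- rewrite bumpE; case: (leqP j s); lia.
      -- move=> E; have -> : s + (n - s.+1) = n.-1 by lia.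
         have hjs : j <= s by move: E; rewrite bumpE; case: (leqP j s); lia.
         apply: (GMg_ext (HF j ltac:(lia) hjK)) => i hi.
         rewrite /join; case: (leqP i s) => his; rewrite /= !bumpE; splitifs; lia.
      -- move=> E hlt.
         have hjs : j = s.+1 by move: hlt; rewrite bumpE; case: (leqP j s); lia.
         subst j. have := HF (s.+1) ltac:(lia) hjK. rewrite -E /=.
         move=> H; apply: (GMg_ext H) => i hi //.
      -- move=> _ hlt l V Vm Vb V0 [i1 hi1 E1].
         have hjs : j = s.+1 by move: hlt; rewrite bumpE; case: (leqP j s); lia.
         subst j.
         apply: (HSJ HS (bm s) (esym V0) Vm Vb) => v hv h1 h2.
         have [vs|vs] : v <= s \/ v = s.+1 by lia.
           left; exists v => //; rewrite bumpE; have -> : (s.+1 <= v) = false by apply/negbTE; lia. by [].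
         right; exists i1 => //; by rewrite E1.
      -- move=> _ hlt t t1 t2.
         have hjs : j = s.+1 by move: hlt; rewrite bumpE; case: (leqP j s); lia.
         subst j.
         have -> : s + (n - s.+1) = n.-1 by lia.
         apply: (GMg_ext (HF (s + t) ltac:(lia) ltac:(lia))) => i hi.
         rewrite /join; case: (leqP i s) => his; rewrite /= !bumpE; splitifs; lia.
Qed.
End Gray.

Lemma strict_ge m (g : nat -> nat) : (forall i, i < m -> g i < g i.+1) -> forall i, i <= m -> i <= g i.
Proof.
move=> Hs; elim=> [|i IH] hi; first by [].
have := Hs i hi. have := IH (ltnW hi). lia.
Qed.

Lemma gray_msSet (X Y : msSet) : is_msSet X -> is_msSet Y -> is_msSet (gray X Y).
Proof.
move=> HX HY; split.
- move=> x /(_ ord0) [H|H]; [exact: HX.1 _ H | exact: HY.1 _ H].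
- move=> n' [x y] [m [s [hm [_ [[x' y'] E]]]]] i.
  case: E => Ex Ey; rewrite /cloven /= Ex Ey.
  have Hs := repr_opfun s.
  have [j hj Ej] : exists2 j, j < n' & opfun s j = opfun s j.+1.
    case: (mono_or_rep (repr_mono Hs)) => // Hst.
    have := strict_ge Hst (leqnn n'); have := repr_bound Hs (leqnn n'). lia.
  case: (ltnP j i) => hji.
  + left; rewrite sact_comp; apply: HX.2.
    have Hc := repr_comp Hs (@repr_floor _ i).
    have := deg_repeat x' Hc. apply.
    by exists j.
  + right; rewrite sact_comp; apply: HY.2.
    have := deg_repeat y' (repr_comp Hs (@repr_ceil _ i)). apply.
    exists (j - i); first by have := ltn_ord i; lia.
    rewrite /= subnKC //. have -> : i + (j - i).+1 = j.+1 by lia. done.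
Qed.

Lemma gray_pre (X Y : msSet) : is_msSet X -> is_msSet Y ->
  pre_complicial X -> pre_complicial Y -> pre_complicial (gray X Y).
Proof.
move=> HX HY PX PY n k hn hk f.
set a := (f n (idop n)).1; set b := (f n (idop n)).2.
have Fx : forall m (x : op m n), f m x = (sact x a, sact x b).
  move=> m x.
  have e : (@sact (Delta_k' n k) m n x (idop n)) = x := comp_id_l x.
  rewrite -{1}e (mfun_nat f x (idop n)). reflexivity.
have GMt : forall m (x : op m n) g, oprep x g -> (marked (f m x) <-> GMg a b m g).
  move=> m x g Hx; rewrite Fx; split.
  - move=> H i hi; have hi' : i < m.+1 by lia.
    case: (H (Ordinal hi')) => Hm; [left|right]; rewrite sact_comp in Hm.
    + exists (Defs.comp x (floor_op (Ordinal hi'))); split=> //.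
      exact: (repr_comp Hx (@repr_floor _ (Ordinal hi'))).
    + exists (Defs.comp x (ceil_op (Ordinal hi'))); split=> //.
      exact: (repr_comp Hx (@repr_ceil _ (Ordinal hi'))).
  - move=> H i; have hi : (nat_of_ord i) <= m by rewrite -ltnS ltn_ord.
    case: (H i hi) => Hm; [left|right]; rewrite sact_comp; apply: (Mk_op Hm).
    + exact: (repr_comp Hx (@repr_floor _ i)).
    + exact: (repr_comp Hx (@repr_ceil _ i)).
have HS : forall m g, (forall i j, i <= j <= m -> g i <= g j) ->
    (forall i, i <= m -> g i <= n) ->
    (forall v, v <= n -> k <= v.+1 -> v <= k.+1 -> exists2 i, i <= m & g i = v) -> GMg a b m g.
  move=> m g gm gb gc; have [x Hx] := ex_op gm gb.
  apply/(GMt _ _ _ Hx); apply: (@mfun_mark _ _ f m x); left.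
  case: (classic (@degenerate (Delta n) m x)) => Hd; [left=> //|right; split=> //].
  apply/forallP=> v; apply/implyP=> /andP[h1 h2].
  have [i hi E] := gc v ltac:(by rewrite -ltnS ltn_ord) h1 h2.
  apply/existsP; exists (inord i); apply/eqP; apply: val_inj.
  by rewrite /= Hx inordK // ltnS.
have HF : forall j, j <= n -> j != k -> GMg a b n.-1 (bump j).
  move=> j hj hjk.
  have [x Hx] : exists x : op n.-1 n, oprep x (bump j).
    apply: ex_op.
    - move=> i i' /andP[h _]; by rewrite leq_bump2.
    - move=> i hi; rewrite bumpE; case: (leqP j i); lia.
  apply/(GMt _ _ _ Hx); apply: (@mfun_mark _ _ f _ x); right; split; first lia.
  apply/negP=> /andP[_ /forallP H].
  have hmn : minn j k < n.-1.+1 by lia.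
  move/eqP: (H (Ordinal hmn)) => E. have E2 := Hx (Ordinal hmn).
  have E3 : bump j (minn j k) = bump k (minn j k) by rewrite -E2; exact: E.
  move: E3; rewrite !bumpE; case: (leqP j (minn j k)); case: (leqP k (minn j k)); lia.
have mark : forall m (x : Delta_k'' n k m), marked x -> marked (f m (x : op m n)).
  move=> m x [Hd|Hm].
    exact: (@mfun_mark _ _ f m x (or_introl Hd)).
  case: (boolP (is_face_k k (x : op m n))) => Hf; last first.
    exact: (@mfun_mark _ _ f m x (or_intror (conj Hm Hf))).
  have em : m = n.-1 by lia. subst m.
  have Hx : oprep (x : op n.-1 n) (bump k).
    move: Hf => /andP[_ /forallP H] i; by move/eqP: (H i).
  apply/(GMt _ _ _ Hx).
  exact: (gray_goal HX HY PX PY hn hk HS HF).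
exists (@MSMap (Delta_k'' n k) (gray X Y) (fun m (x : Delta_k'' n k m) => f m (x : op m n))
         (@mfun_nat _ _ f) mark).
by [].
Qed.

Theorem theorem1p24 (X Y : msSet) :
  is_msSet X -> is_msSet Y ->
  pre_complicial X -> pre_complicial Y ->
  is_msSet (gray X Y) /\ pre_complicial (gray X Y).
Proof.
move=> HX HY PX PY; split; [exact: gray_msSet | exact: gray_pre].
Qed.
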